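(* Consider a black-white array (BWA) storing at most $n=2^m$ values. Suppose the values are uniformly distributed, so that the probability that the searched value lies in a given active segment is proportional to that segment's length. Then the amortized (expected) time of a search for a value that is present in the BWA is $O(\log n)$.
   Context: A black-white array (BWA) of size $N=2^K$ stores values from a totally ordered set. Its white array is $W[1..N-1]$. For $i\ge0$, the segment of rank $i$ is the index block $[2^i,2^{i+1}-1]$, of length $2^i$. A state variable $\mathtt{total}$ counts stored values. The rank-$i$ segment is active iff bit $i$ of $\mathtt{total}$ is $1$. Between operations, all stored values lie in the active white segments, each sorted ascending. Search$(v)$: for $i=K-1$ down to $0$, if the rank-$i$ segment is active, binary-search the white rank-$i$ segment for $v$. A binary search of a segment of length $L$ costs $O(\log L+1)$. Return the index at the first success, or Nil if none. *)

(* Defs.v *)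
From mathcomp Require Import all_boot all_order all_algebra.
Set Implicit Arguments. Unset Strict Implicit. Unset Printing Implicit Defensive.
Import Order.TTheory GRing.Theory Num.Theory.

(* The rank-i segment is active iff bit i of total is 1. *)
Definition active (total i : nat) : bool := odd (total %/ 2 ^ i).

Definition segment (i : nat) : seq nat := map (addn (2 ^ i)) (iota 0 (2 ^ i)).

(* Cost of Search(v) on the white array W of a BWA with state total,
   scanning ranks k-1 down to 0; bs L is the cost of a binary search of a
   segment of length L. *)
Fixpoint search_cost {d} {T : orderType d} (bs : nat -> nat) (total : nat)
  (W : nat -> T) (v : T) (k : nat) : nat :=
  match k with
  | 0 => 0
  | i.+1 =>
      if active total i then
        bs (2 ^ i) + (if has (fun p => W p == v) (segment i) then 0
                      else search_cost bs total W v i)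
      else search_cost bs total W v i
  end.

(* Expected cost of searching a stored value, each stored value (position in
   an active white segment) being equally likely: segment i is hit with
   probability 2^i / total. *)
Definition expected_search_cost {d} {T : orderType d} (bs : nat -> nat)
  (K total : nat) (W : nat -> T) : rat :=
  (\sum_(i < K | active total i)
     \sum_(p <- segment i) (search_cost bs total W (W p) K)%:R / total%:R)%R.

(* Main.v *)
Require Import Defs.
From mathcomp Require Import all_boot all_order all_algebra.
Import Order.TTheory GRing.Theory Num.Theory.

Definition S (bs : nat -> nat) total i k := \sum_(i <= j < k | active total j) bs (2 ^ j).

Lemma cost_bound d (T : orderType d) bs total (W : nat -> T) i p k :
  i < k -> active total i -> p \in segment i ->
  search_cost bs total W (W p) k <= S bs total i k.
Proof.
move=> + ai ps; elim: k => [//|k IH] ik /=.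
rewrite /S big_mkcond big_nat_recr /=; last by rewrite -ltnS.
rewrite -big_mkcond /=.
case: (ltngtP i k) => [lt|gt|eq].
- have := IH lt; rewrite /S => {}IH.
  case: ifP => ak; last by rewrite addn0.
  rewrite addnC leq_add2r; case: has => //.
- by move: ik; rewrite ltnS leqNgt gt.
- subst k; rewrite ai.
  have -> : has (fun q => W q == W p) (segment i) by apply/hasP; exists p.
  by rewrite addn0 leq_addl.
Qed.

Lemma sum_seq_le (s : seq nat) (f : nat -> nat) g :
  (forall p, p \in s -> f p <= g) -> \sum_(p <- s) f p <= size s * g.
Proof.
elim: s => [|x s IH] H; first by rewrite big_nil.
rewrite big_cons /= mulSn leq_add ?H ?mem_head // IH // => p ps.
by apply: H; rewrite inE ps orbT.
Qed.

Lemma geom K : \sum_(i < K) 2 ^ i < 2 ^ K.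
Proof.
elim: K => [|K IH]; first by rewrite big_ord0.
by rewrite big_ord_recr /= expnS mul2n -addnn ltn_add2r.
Qed.

Lemma F_bound bs total K :
  \sum_(i < K | active total i) 2 ^ i * S bs total i K
  <= \sum_(j < K | active total j) bs (2 ^ j) * 2 ^ j.+1.
Proof.
elim: K => [|K IH]; first by rewrite !big_ord0.
have E : forall i : 'I_K, S bs total i K.+1 = S bs total i K + (if active total K then bs (2^K) else 0).
  move=> i; rewrite /S big_mkcond big_nat_recr /=; last by apply: ltnW.
  rewrite -big_mkcond /=.
  by case: ifP; rewrite ?addn0.
have EK : S bs total K K.+1 = if active total K then bs (2^K) else 0.
  by rewrite /S big_mkcond big_nat1.
rewrite [in X in _ <= X]big_mkcond big_ord_recr /= -big_mkcond /=.
rewrite big_mkcond big_ord_recr /= -big_mkcond /= EK.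
rewrite (eq_bigr (fun i : 'I_K => 2 ^ i * S bs total i K + 2 ^ i * (if active total K then bs (2^K) else 0))); last first.
  by move=> i _; rewrite E mulnDr.
rewrite big_split /=.
case: ifP => aK; last first.
  under [X in _ + X + _ <= _]eq_bigr => i _ do rewrite muln0.
  by rewrite big1_eq !addn0 (leq_trans IH) // addn0.
rewrite -big_distrl /= -addnA leq_add //.
rewrite -mulnDl mulnC leq_mul2l; apply/orP; right.
rewrite expnS mul2n -addnn leq_add2r; apply: ltnW.
apply: leq_ltn_trans (geom K).
rewrite [X in _ <= X](bigID (fun i : 'I_K => active total i)) /=; exact: leq_addr.
Qed.

Lemma bits_le K n : \sum_(j < K | active n j) 2 ^ j <= n.
Proof.
elim: K n => [|K IH] n; first by rewrite big_ord0.
rewrite big_mkcond big_ord_recl /= -big_mkcond /=.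
have -> : \sum_(i < K | active n (bump 0 i)) 2 ^ bump 0 i = 2 * \sum_(i < K | active n./2 i) 2 ^ i.
  rewrite big_distrr /=; apply: eq_big => i.
    by rewrite /active /bump /= add1n expnS divnMA divn2.
  by rewrite /bump add1n expnS.
rewrite /active expn0 divn1.
rewrite {3}(divn_eq n 2) modn2 addnC.
rewrite -divn2 [n %/ 2 * 2]mulnC leq_add ?leq_mul2l ?IH ?orbT //; by case: odd.
Qed.

Theorem mainTheorem9 :
  forall (c : nat) (bs : nat -> nat),
    (forall L : nat, 0 < L -> bs L <= c * (trunc_log 2 L).+1) ->
  exists C : nat,
    forall (d : Order.disp_t) (T : orderType d) (m K total : nat) (W : nat -> T),
      0 < total ->
      total <= 2 ^ m ->
      total < 2 ^ K ->
      (forall i, i < K -> active total i -> sorted <=%O [seq W p | p <- segment i]) ->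
      (expected_search_cost bs K total W <= (C * m.+1)%:R)%R.
Proof.
move=> c bs Hbs; exists (2 * c) => d T m K total W t0 tm tK _.
have Hnat : \sum_(i < K | active total i) \sum_(p <- segment i) search_cost bs total W (W p) K
    <= 2 * c * m.+1 * total.
  apply: (@leq_trans (\sum_(i < K | active total i) 2 ^ i * S bs total i K)).
    apply: leq_sum => i ai.
    have := @sum_seq_le (segment i) (fun p => search_cost bs total W (W p) K) (S bs total i K).
    rewrite /segment size_map size_iota; apply => p ps.
    by apply: cost_bound.
  apply: (leq_trans (F_bound bs total K)).
  apply: (@leq_trans (\sum_(j < K | active total j) (2 * c * m.+1) * 2 ^ j)).
    apply: leq_sum => j aj.
    have hj : j <= m.
      have : 0 < total %/ 2 ^ j by move: aj; rewrite /active; case: (total %/ 2 ^ j).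
      rewrite divn_gt0 ?expn_gt0 // => h.
      by rewrite -(@leq_exp2l 2) // (leq_trans h tm).
    have hb : bs (2 ^ j) <= c * m.+1.
      apply: (leq_trans (Hbs _ (expn_gt0 2 j))).
      by rewrite trunc_expnK // leq_mul2l ltnS hj orbT.
    by rewrite expnS mulnA [bs _ * 2]mulnC -(mulnA 2 c) leq_mul2r leq_mul2l hb !orbT.
  by rewrite -big_distrr /= leq_mul2l bits_le orbT.
rewrite /expected_search_cost.
under eq_bigr => i _ do rewrite -mulr_suml -natr_sum.
rewrite -mulr_suml -natr_sum ler_pdivrMr ?ltr0n // -natrM ler_nat.
by rewrite (mulnC 2 c) (mulnC _ total) mulnC ; move: Hnat; rewrite (mulnC 2 c) mulnC.
Qed.
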